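(* Let $G$ be a group generated by elements $g_1,\dots,g_n$ and let $H$ be a cocommutative Hopf algebra over $\Bbbk$. Then every $\varphi\in\mathrm{Hom}_{\mathcal H}(G;H)$ is completely determined by the single element $\varphi_n(g_1,\dots,g_n)\in H^{\otimes n}$; that is, the evaluation map $\varphi\mapsto\varphi_n(g_1,\dots,g_n)$ from $\mathrm{Hom}_{\mathcal H}(G;H)$ to $H^{\otimes n}$ is injective.
   Context: $\Bbbk$ is a field of characteristic $0$. $H$ is a cocommutative Hopf algebra over $\Bbbk$ with multiplication $m$, comultiplication $\Delta$, unit $\eta\colon\Bbbk\to H$, counit $\epsilon\colon H\to\Bbbk$ and antipode $S$. For a group $G$, $\mathrm{Hom}_{\mathcal H}(G;H)$ denotes the set of sequences $\varphi=(\varphi_k)_{k\ge0}$ of functions $\varphi_k\colon G^k\to H^{\otimes k}$ (with $H^{\otimes 0}=\Bbbk$, $\varphi_0=1$) satisfying, for all $k$ and all group elements: (1) $\varphi_k$ commutes with the action of $\Sigma_k$ (permuting entries of $G^k$ and tensor factors); (2) $\varphi_k(1,g_1,\dots,g_{k-1})=\eta(1)\otimes\varphi_{k-1}(g_1,\dots,g_{k-1})$; (3) $(\epsilon\otimes\mathrm{id}^{k-1})\varphi_k(g_1,\dots,g_k)=\varphi_{k-1}(g_2,\dots,g_k)$; (4) $\varphi_k(g^{-1},g_1,\dots,g_{k-1})=(S\otimes\mathrm{id}^{k-1})\varphi_k(g,g_1,\dots,g_{k-1})$; (5) $\varphi_k(g,g,g_1,\dots,g_{k-2})=(\Delta\otimes\mathrm{id}^{k-2})\varphi_{k-1}(g,g_1,\dots,g_{k-2})$;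 (6) $\varphi_k(g_1g_2,g_3,\dots,g_{k+1})=(m\otimes\mathrm{id}^{k-1})\varphi_{k+1}(g_1,g_2,\dots,g_{k+1})$. *)

(* Defs.v *)
From HB Require Import structures.
From mathcomp Require Import all_boot all_order all_algebra all_fingroup.
Set Implicit Arguments. Unset Strict Implicit. Unset Printing Implicit Defensive.
Import GRing.Theory.
Local Open Scope ring_scope.

Definition fcons (T : Type) (k : nat) (x : T) (t : {ffun 'I_k -> T}) :
  {ffun 'I_k.+1 -> T} :=
  [ffun i => if unlift ord0 i is Some j then t j else x].

Definition ftail (T : Type) (k : nat) (t : {ffun 'I_k.+1 -> T}) :
  {ffun 'I_k -> T} := [ffun j => t (lift ord0 j)].

Definition fset (T : Type) (k : nat) (t : {ffun 'I_k -> T}) (i : 'I_k) (x : T) :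
  {ffun 'I_k -> T} := [ffun j => if j == i then x else t j].

Definition fperm (T : Type) (k : nat) (s : 'S_k) (t : {ffun 'I_k -> T}) :
  {ffun 'I_k -> T} := [ffun i => t ((s^-1)%g i)].

(* An element of H^{(x)k} is represented by a formal linear            *)
(* combination  sum_p  p.1 (p.2 0 (x) ... (x) p.2 (k-1))  of pure      *)
(* tensors; two representatives denote the same tensor ('teq') iff    *)
(* they have the same image under every k-multilinear map into every  *)
(* K-vector space, i.e. H^{(x)k} is the free vector space on H^k       *)
(* modulo the kernel of the universal multilinear map (standard        *)
(* construction of the tensor product).  H^{(x)0} = K.                 *)

Section Tensor.
Variables (K : fieldType) (H : algType K).

Definition fts (k : nat) := seq (K * {ffun 'I_k -> H}).

Definition multilinear (k : nat) (W : lmodType K) (f : {ffun 'I_k -> H} -> W) :=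
  forall (t : {ffun 'I_k -> H}) (i : 'I_k) (a : K) (x y : H),
    f (fset t i (a *: x + y)) = a *: f (fset t i x) + f (fset t i y).

Definition teval (k : nat) (W : lmodType K) (f : {ffun 'I_k -> H} -> W)
  (t : fts k) : W := \sum_(p <- t) p.1 *: f p.2.

Definition teq (k : nat) (t u : fts k) : Prop :=
  forall (W : lmodType K) (f : {ffun 'I_k -> H} -> W),
    multilinear f -> teval f t = teval f u.

(* vector space operations (addition is concatenation ++) *)
Definition tscale (k : nat) (a : K) (t : fts k) : fts k :=
  [seq (a * p.1, p.2) | p : K * {ffun 'I_k -> H} <- t].

Definition tpure (k : nat) (t : {ffun 'I_k -> H}) : fts k := [:: (1, t)].

Definition tunit (k : nat) : fts k := tpure [ffun => 1].

Definition tmul (k : nat) (t u : fts k) : fts k :=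
  [seq (p.1 * q.1, [ffun i => p.2 i * q.2 i])
  | p : K * {ffun 'I_k -> H} <- t, q : K * {ffun 'I_k -> H} <- u].

Definition tapply (k : nat) (f : H -> H) (i : 'I_k) (t : fts k) : fts k :=
  [seq (p.1, fset p.2 i (f (p.2 i))) | p : K * {ffun 'I_k -> H} <- t].

Definition tpermute (k : nat) (s : 'S_k) (t : fts k) : fts k :=
  [seq (p.1, fperm s p.2) | p : K * {ffun 'I_k -> H} <- t].

Definition tunit_first (k : nat) (t : fts k) : fts k.+1 :=
  [seq (p.1, fcons 1 p.2) | p : K * {ffun 'I_k -> H} <- t].

Definition tcounit_first (eps : H -> K) (k : nat) (t : fts k.+1) : fts k :=
  [seq (p.1 * eps (p.2 ord0), ftail p.2) | p : K * {ffun 'I_k.+1 -> H} <- t].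

Definition tmul_first (k : nat) (t : fts k.+2) : fts k.+1 :=
  [seq (p.1, fcons (p.2 ord0 * p.2 (lift ord0 ord0)) (ftail (ftail p.2)))
  | p : K * {ffun 'I_k.+2 -> H} <- t].

Definition tcop_first (D : H -> fts 2) (k : nat) (t : fts k.+1) : fts k.+2 :=
  flatten [seq [seq (p.1 * q.1, fcons (q.2 ord0) (fcons (q.2 ord_max) (ftail p.2)))
               | q : K * {ffun 'I_2 -> H} <- D (p.2 ord0)] | p : K * {ffun 'I_k.+1 -> H} <- t].

Definition tcop_second (D : H -> fts 2) (t : fts 2) : fts 3 :=
  flatten [seq [seq (p.1 * q.1, fcons (p.2 ord0) q.2)
               | q : K * {ffun 'I_2 -> H} <- D (p.2 ord_max)] | p : K * {ffun 'I_2 -> H} <- t].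

Definition tcounit_second (eps : H -> K) (t : fts 2) : fts 1 :=
  [seq (p.1 * eps (p.2 ord_max), [ffun _ => p.2 ord0])
  | p : K * {ffun 'I_2 -> H} <- t].

Definition tcontract (t : fts 2) : H :=
  teval (W := H) (fun x : {ffun 'I_2 -> H} => x ord0 * x ord_max) t.

Record is_hopf (D : H -> fts 2) (eps : H -> K) (S : H -> H) : Prop := {
  cop_linear : forall (a : K) (x y : H),
      teq (D (a *: x + y)) (tscale a (D x) ++ D y);
  counit_linear : forall (a : K) (x y : H), eps (a *: x + y) = a * eps x + eps y;
  antipode_linear : forall (a : K) (x y : H), S (a *: x + y) = a *: S x + S y;
  coassoc : forall x, teq (tcop_first D (D x)) (tcop_second D (D x));
  counit_l : forall x, teq (tcounit_first eps (D x)) (tpure [ffun => x]);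
  counit_r : forall x, teq (tcounit_second eps (D x)) (tpure [ffun => x]);
  cop1 : teq (D 1) (tunit 2);
  copM : forall x y, teq (D (x * y)) (tmul (D x) (D y));
  counit1 : eps 1 = 1;
  counitM : forall x y, eps (x * y) = eps x * eps y;
  antipode_l : forall x, tcontract (tapply S ord0 (D x)) = eps x *: 1;
  antipode_r : forall x, tcontract (tapply S ord_max (D x)) = eps x *: 1
}.

Definition cocommutative (D : H -> fts 2) : Prop :=
  forall x, teq (tpermute (tperm ord0 ord_max) (D x)) (D x).

Record is_homH (G : groupType) (D : H -> fts 2) (eps : H -> K) (S : H -> H)
  (phi : forall k : nat, {ffun 'I_k -> G} -> fts k) : Prop := {
  homH0 : forall g : {ffun 'I_0 -> G}, teq (phi 0 g) (tunit 0);
  (* (1) *)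
  homH_perm : forall k (s : 'S_k) (g : {ffun 'I_k -> G}),
      teq (phi k (fperm s g)) (tpermute s (phi k g));
  (* (2) *)
  homH_one : forall k (g : {ffun 'I_k -> G}),
      teq (phi k.+1 (fcons 1%g g)) (tunit_first (phi k g));
  (* (3) *)
  homH_counit : forall k (g : {ffun 'I_k.+1 -> G}),
      teq (tcounit_first eps (phi k.+1 g)) (phi k (ftail g));
  (* (4) *)
  homH_inv : forall k (x : G) (g : {ffun 'I_k -> G}),
      teq (phi k.+1 (fcons (x^-1)%g g)) (tapply S ord0 (phi k.+1 (fcons x g)));
  (* (5) *)
  homH_diag : forall k (x : G) (g : {ffun 'I_k -> G}),
      teq (phi k.+2 (fcons x (fcons x g))) (tcop_first D (phi k.+1 (fcons x g)));
  (* (6) *)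
  homH_mul : forall k (x y : G) (g : {ffun 'I_k -> G}),
      teq (phi k.+1 (fcons (x * y)%g g)) (tmul_first (phi k.+2 (fcons x (fcons y g))))
}.

End Tensor.

Inductive in_gen (G : groupType) (n : nat) (gs : {ffun 'I_n -> G}) : G -> Prop :=
  | in_gen_base i : in_gen gs (gs i)
  | in_gen_one : in_gen gs 1%g
  | in_gen_mul x y : in_gen gs x -> in_gen gs y -> in_gen gs (x * y)%g
  | in_gen_inv x : in_gen gs x -> in_gen gs (x^-1)%g.

(* Main.v *)
Require Import Defs.
From HB Require Import structures.
From mathcomp Require Import all_boot all_order all_algebra all_fingroup.
Set Implicit Arguments. Unset Strict Implicit. Unset Printing Implicit Defensive.
Import GRing.Theory.
Local Open Scope ring_scope.

Section FF.
Variable T : Type.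

Lemma fcons0 k (x : T) (t : {ffun 'I_k -> T}) : fcons x t ord0 = x.
Proof. by rewrite ffunE unlift_none. Qed.

Lemma fconsS k (x : T) (t : {ffun 'I_k -> T}) j : fcons x t (lift ord0 j) = t j.
Proof. by rewrite ffunE liftK. Qed.

Lemma ftail_fcons k (x : T) (t : {ffun 'I_k -> T}) : ftail (fcons x t) = t.
Proof. by apply/ffunP => j; rewrite ffunE fconsS. Qed.

Lemma fcons_ftail k (t : {ffun 'I_k.+1 -> T}) : fcons (t ord0) (ftail t) = t.
Proof.
apply/ffunP => i; rewrite ffunE; case: unliftP => [j ->|->] //.
by rewrite ffunE.
Qed.

Lemma fset_fcons0 k (x v : T) (t : {ffun 'I_k -> T}) :
  fset (fcons x t) ord0 v = fcons v t.
Proof.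
apply/ffunP => i; rewrite !ffunE; case: unliftP => [j ->|->]; last by rewrite eqxx.
by rewrite eq_sym (negbTE (neq_lift _ _)).
Qed.

Lemma fset_fconsS k (x v : T) (t : {ffun 'I_k -> T}) j :
  fset (fcons x t) (lift ord0 j) v = fcons x (fset t j v).
Proof.
apply/ffunP => i; rewrite !ffunE; case: unliftP => [j' ->|->].
  by rewrite (inj_eq (lift_inj (h:=ord0))) ffunE.
by rewrite (negbTE (neq_lift _ _)).
Qed.

Lemma fperm_fset k (s : 'S_k) (t : {ffun 'I_k -> T}) i v :
  fperm s (fset t i v) = fset (fperm s t) (s i) v.
Proof.
apply/ffunP => j; rewrite !ffunE.
have -> : ((s^-1)%g j == i) = (j == s i).
  by apply/eqP/eqP => [<-|->]; rewrite ?permKV ?permK.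
by [].
Qed.

Lemma codom_fcons k (x : T) (t : {ffun 'I_k -> T}) :
  codom (fcons x t) = x :: codom t.
Proof.
rewrite !codomE enum_ordSl /= fcons0; congr (_ :: _).
by rewrite -map_comp; apply: eq_map => j /=; rewrite fconsS.
Qed.

Lemma fset_same k (t : {ffun 'I_k -> T}) i : fset t i (t i) = t.
Proof. by apply/ffunP => j; rewrite ffunE; case: eqP => // ->. Qed.

Lemma fset_fset k (t : {ffun 'I_k -> T}) i v w : fset (fset t i v) i w = fset t i w.
Proof. by apply/ffunP => j; rewrite !ffunE; case: eqP. Qed.

Lemma fset_comm k (t : {ffun 'I_k -> T}) i j v w : i != j ->
  fset (fset t i v) j w = fset (fset t j w) i v.
Proof.
move=> ij; apply/ffunP => l; rewrite !ffunE.
case: (eqVneq l i) => [->|li]; first by rewrite (negbTE ij).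
by [].
Qed.

End FF.

Lemma codom_perm (T : eqType) k (t u : {ffun 'I_k -> T}) :
  perm_eq (codom u) (codom t) -> exists s : 'S_k, u = fperm s t.
Proof.
move=> P.
have P' : perm_eq (codom u) [tuple t i | i < k].
  by rewrite /= -codomE.
case/tuple_permP: P' => p E; exists (p^-1)%g.
apply/ffunP => i; rewrite ffunE invgK.
have := congr1 (fun s => nth (u i) s i) E.
rewrite codomE /= (nth_map i) ?size_enum_ord // nth_ord_enum.
by rewrite (nth_map i) ?size_enum_ord // nth_ord_enum tnth_mktuple.
Qed.
Set Implicit Arguments. Unset Strict Implicit. Unset Printing Implicit Defensive.
Import GRing.Theory.
Local Open Scope ring_scope.

Section T.
Variables (K : fieldType) (H : algType K).

Lemma teq_refl k (t : fts H k) : teq t t.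
Proof. by []. Qed.
Lemma teq_sym k (t u : fts H k) : teq t u -> teq u t.
Proof. by move=> E W f Hf; rewrite E. Qed.
Lemma teq_trans k (t u v : fts H k) : teq t u -> teq u v -> teq t v.
Proof. by move=> E1 E2 W f Hf; rewrite E1 // E2. Qed.

Lemma teval_cat k (W : lmodType K) (f : {ffun 'I_k -> H} -> W) t u :
  teval f (t ++ u) = teval f t + teval f u.
Proof. by rewrite /teval big_cat. Qed.

Lemma teval_scale k (W : lmodType K) (f : {ffun 'I_k -> H} -> W) a t :
  teval f (tscale a t) = a *: teval f t.
Proof.
rewrite /teval /tscale big_map scaler_sumr; apply: eq_bigr => p _.
by rewrite scalerA.
Qed.

Lemma teval_ext k (W : lmodType K) (f g : {ffun 'I_k -> H} -> W) t :
  f =1 g -> teval f t = teval g t.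
Proof. by move=> E; rewrite /teval; apply: eq_bigr => p _; rewrite E. Qed.

Lemma teval_lin k (W : lmodType K) (f g : {ffun 'I_k -> H} -> W) a t :
  teval (fun x => a *: f x + g x) t = a *: teval f t + teval g t.
Proof.
rewrite /teval scaler_sumr -big_split; apply: eq_bigr => p _ /=.
by rewrite scalerDr !scalerA mulrC.
Qed.

Lemma teval_mapop k m (W : lmodType K) (f : {ffun 'I_m -> H} -> W)
  (c : {ffun 'I_k -> H} -> K) (h : {ffun 'I_k -> H} -> {ffun 'I_m -> H}) t :
  teval f [seq (p.1 * c p.2, h p.2) | p : K * {ffun 'I_k -> H} <- t]
  = teval (fun x => c x *: f (h x)) t.
Proof. by rewrite /teval big_map; apply: eq_bigr => p _; rewrite scalerA. Qed.

Lemma teval_mapop1 k m (W : lmodType K) (f : {ffun 'I_m -> H} -> W)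
  (h : {ffun 'I_k -> H} -> {ffun 'I_m -> H}) t :
  teval f [seq (p.1, h p.2) | p : K * {ffun 'I_k -> H} <- t]
  = teval (fun x => f (h x)) t.
Proof. by rewrite /teval big_map. Qed.

Lemma teval_mapl k m (W : lmodType K) (f : {ffun 'I_m -> H} -> W) (a : K)
  (h : {ffun 'I_k -> H} -> {ffun 'I_m -> H}) t :
  teval f [seq (a * q.1, h q.2) | q : K * {ffun 'I_k -> H} <- t]
  = a *: teval (fun x => f (h x)) t.
Proof.
rewrite /teval big_map scaler_sumr; apply: eq_bigr => p _.
by rewrite scalerA.
Qed.

Section ML.
Variables (W : lmodType K).

Lemma ml0 k (f : {ffun 'I_k.+1 -> H} -> W) : multilinear f ->
  forall u a x y, f (fcons (a *: x + y) u) = a *: f (fcons x u) + f (fcons y u).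
Proof. by move=> Hf u a x y; have := Hf (fcons 0 u) ord0 a x y; rewrite !fset_fcons0. Qed.

Lemma mlS k (f : {ffun 'I_k.+1 -> H} -> W) : multilinear f ->
  forall z u j a x y, f (fcons z (fset u j (a *: x + y)))
     = a *: f (fcons z (fset u j x)) + f (fcons z (fset u j y)).
Proof. by move=> Hf z u j a x y; have := Hf (fcons z u) (lift ord0 j) a x y; rewrite !fset_fconsS. Qed.

Lemma ml1 k (f : {ffun 'I_k.+2 -> H} -> W) : multilinear f ->
  forall z u a x y, f (fcons z (fcons (a *: x + y) u))
     = a *: f (fcons z (fcons x u)) + f (fcons z (fcons y u)).
Proof. by move=> Hf z u a x y; have := mlS Hf z (fcons 0 u) ord0 a x y; rewrite !fset_fcons0. Qed.

Lemma ml2 k (f : {ffun 'I_k.+2 -> H} -> W) : multilinear f ->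
  forall z b u j a x y, f (fcons z (fcons b (fset u j (a *: x + y))))
     = a *: f (fcons z (fcons b (fset u j x))) + f (fcons z (fcons b (fset u j y))).
Proof. by move=> Hf z b u j a x y; have := mlS Hf z (fcons b u) (lift ord0 j) a x y; rewrite !fset_fconsS. Qed.

Lemma ml_S k (f : {ffun 'I_k.+1 -> H} -> W) :
  (forall u a x y, f (fcons (a *: x + y) u) = a *: f (fcons x u) + f (fcons y u)) ->
  (forall z u j a x y, f (fcons z (fset u j (a *: x + y)))
     = a *: f (fcons z (fset u j x)) + f (fcons z (fset u j y))) ->
  multilinear f.
Proof.
move=> H0 H1 t i a x y; rewrite -(fcons_ftail t).
case: (unliftP ord0 i) => [j ->|->].
  by rewrite !fset_fconsS H1.
by rewrite !fset_fcons0 H0.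
Qed.

Lemma ml_SS k (f : {ffun 'I_k.+2 -> H} -> W) :
  (forall u b a x y, f (fcons (a *: x + y) (fcons b u))
     = a *: f (fcons x (fcons b u)) + f (fcons y (fcons b u))) ->
  (forall u z a x y, f (fcons z (fcons (a *: x + y) u))
     = a *: f (fcons z (fcons x u)) + f (fcons z (fcons y u))) ->
  (forall z b u j a x y, f (fcons z (fcons b (fset u j (a *: x + y))))
     = a *: f (fcons z (fcons b (fset u j x))) + f (fcons z (fcons b (fset u j y)))) ->
  multilinear f.
Proof.
move=> H0 H1 H2; apply: ml_S.
  by move=> u a x y; rewrite -(fcons_ftail u) H0.
move=> z u j a x y; rewrite -(fcons_ftail u).
case: (unliftP ord0 j) => [j' ->|->].
  by rewrite !fset_fconsS H2.
by rewrite !fset_fcons0 H1.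
Qed.

End ML.

Lemma teq_tpermute k (s : 'S_k) (t u : fts H k) : teq t u -> teq (tpermute s t) (tpermute s u).
Proof.
move=> E W f Hf; rewrite /tpermute !teval_mapop1; apply: E.
by move=> x i a v w; rewrite !fperm_fset Hf.
Qed.

Lemma teq_tunit_first k (t u : fts H k) : teq t u -> teq (tunit_first t) (tunit_first u).
Proof.
move=> E W f Hf; rewrite /tunit_first !teval_mapop1; apply: E.
by move=> x i a v w; have := Hf (fcons 1 x) (lift ord0 i) a v w; rewrite !fset_fconsS.
Qed.

Lemma teq_tcounit (eps : H -> K) k (t u : fts H k.+1) :
  (forall (a : K) (x y : H), eps (a *: x + y) = a * eps x + eps y) ->
  teq t u -> teq (tcounit_first eps t) (tcounit_first eps u).
Proof.
move=> Le E W f Hf; rewrite /tcounit_first !(@teval_mapop k.+1 k W f (fun x => eps (x ord0)) (@ftail _ k)); apply: E.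
apply: ml_S => [u' a x y|z u' j a x y]; rewrite ?fcons0 ?ftail_fcons.
  by rewrite Le scalerDl scalerA.
by rewrite Hf scalerDr !scalerA mulrC.
Qed.

Lemma teq_tapply0 (S : H -> H) k (t u : fts H k.+1) :
  (forall (a : K) (x y : H), S (a *: x + y) = a *: S x + S y) ->
  teq t u -> teq (tapply S ord0 t) (tapply S ord0 u).
Proof.
move=> Le E W f Hf; rewrite /tapply !(@teval_mapop1 k.+1 k.+1 W f (fun x => fset x ord0 (S (x ord0)))); apply: E.
apply: ml_S => [u' a x y|z u' j a x y]; rewrite !fcons0 !fset_fcons0.
  by rewrite Le (ml0 Hf).
by rewrite (mlS Hf).
Qed.

Lemma fcons2_max (x y : H) (e : {ffun 'I_0 -> H}) :
  fcons x (fcons y e) (@ord_max 1) = y.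
Proof.
have -> : @ord_max 1 = lift ord0 ord0 by apply: val_inj.
by rewrite fconsS fcons0.
Qed.

Lemma ffun0_eq (e e' : {ffun 'I_0 -> H}) : e = e'.
Proof. by apply/ffunP => -[]. Qed.

Lemma teq_tmul_first k (t u : fts H k.+2) : teq t u -> teq (tmul_first t) (tmul_first u).
Proof.
move=> E W f Hf; rewrite /tmul_first !(@teval_mapop1 k.+2 k.+1 W f (fun x => fcons (x ord0 * x (lift ord0 ord0)) (ftail (ftail x)))); apply: E.
apply: ml_SS => *; rewrite !fcons0 !fconsS !fcons0 !ftail_fcons.
- by rewrite mulrDl -scalerAl (ml0 Hf).
- by rewrite mulrDr -scalerAr (ml0 Hf).
- by rewrite (mlS Hf).
Qed.

Lemma teval_tcop (D : H -> fts H 2) k (W : lmodType K) (f : {ffun 'I_k.+2 -> H} -> W) t :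
  teval f (tcop_first D t) =
  teval (fun x => teval (fun y : {ffun 'I_2 -> H} =>
          f (fcons (y ord0) (fcons (y ord_max) (ftail x)))) (D (x ord0))) t.
Proof.
rewrite /tcop_first /teval big_flatten /= big_map; apply: eq_bigr => p _.
by have := teval_mapl f p.1 (fun y : {ffun 'I_2 -> H} =>
          (fcons (y ord0) (fcons (y ord_max) (ftail p.2)))) (D (p.2 ord0)).
Qed.

Lemma teq_tcop (D : H -> fts H 2) k (t u : fts H k.+1) :
  (forall (a : K) (x y : H), teq (D (a *: x + y)) (tscale a (D x) ++ D y)) ->
  teq t u -> teq (tcop_first D t) (tcop_first D u).
Proof.
move=> Le E W f Hf; rewrite !teval_tcop; apply: E.
apply: ml_S => [u' a x y|z u' j a x y]; rewrite !fcons0 !ftail_fcons.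
  rewrite Le ?teval_cat ?teval_scale //.
  apply: ml_SS => [e b a' x' y'|e z a' x' y'|z b e j]; last by case: j.
    by rewrite !fcons0 !fcons2_max (ml0 Hf).
  by rewrite !fcons0 !fcons2_max (ml1 Hf).
rewrite -teval_lin; apply: teval_ext => y0.
by rewrite (ml2 Hf).
Qed.

End T.
Set Implicit Arguments. Unset Strict Implicit. Unset Printing Implicit Defensive.
Import GRing.Theory.
Local Open Scope ring_scope.

Section Main.
Variables (K : fieldType) (H : algType K) (D : H -> fts H 2) (eps : H -> K) (S : H -> H)
  (G : groupType).
Variables phi psi : forall k : nat, {ffun 'I_k -> G} -> fts H k.
Hypotheses (Hh : is_hopf D eps S) (Hphi : is_homH D eps S phi) (Hpsi : is_homH D eps S psi).

Definition R k (t : {ffun 'I_k -> G}) := teq (phi t) (psi t).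

Lemma R_perm k (s : 'S_k) t : R t -> R (fperm s t).
Proof.
move=> E; apply: teq_trans (homH_perm Hphi s t) _.
apply: teq_trans _ (teq_sym (homH_perm Hpsi s t)).
exact: teq_tpermute.
Qed.

Lemma R_del k x (t : {ffun 'I_k -> G}) : R (fcons x t) -> R t.
Proof.
move=> E; have A1 := homH_counit Hphi (fcons x t).
have A2 := homH_counit Hpsi (fcons x t).
rewrite ftail_fcons in A1 A2.
apply: teq_trans (teq_sym A1) _; apply: teq_trans _ A2.
exact: teq_tcounit (counit_linear Hh) E.
Qed.

Lemma R_dup k x (t : {ffun 'I_k -> G}) : R (fcons x t) -> R (fcons x (fcons x t)).
Proof.
move=> E; apply: teq_trans (homH_diag Hphi x t) _.
apply: teq_trans _ (teq_sym (homH_diag Hpsi x t)).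
exact: teq_tcop (cop_linear Hh) E.
Qed.

Lemma R_mul k x y (t : {ffun 'I_k -> G}) :
  R (fcons x (fcons y t)) -> R (fcons (x * y)%g t).
Proof.
move=> E; apply: teq_trans (homH_mul Hphi x y t) _.
apply: teq_trans _ (teq_sym (homH_mul Hpsi x y t)).
exact: teq_tmul_first E.
Qed.

Lemma R_inv k x (t : {ffun 'I_k -> G}) : R (fcons x t) -> R (fcons (x^-1)%g t).
Proof.
move=> E; apply: teq_trans (homH_inv Hphi x t) _.
apply: teq_trans _ (teq_sym (homH_inv Hpsi x t)).
exact: teq_tapply0 (antipode_linear Hh) E.
Qed.

Lemma R_one k (t : {ffun 'I_k -> G}) : R t -> R (fcons 1%g t).
Proof.
move=> E; apply: teq_trans (homH_one Hphi t) _.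
apply: teq_trans _ (teq_sym (homH_one Hpsi t)).
exact: teq_tunit_first E.
Qed.

Definition RL (l : seq G) := forall k (t : {ffun 'I_k -> G}), perm_eq (codom t) l -> R t.

Definition tl (l : seq G) : {ffun 'I_(size l) -> G} := [ffun i : 'I_(size l) => nth 1%g l i].

Lemma codom_tl l : codom (tl l) = l.
Proof.
apply: (@eq_from_nth _ 1%g); first by rewrite size_codom card_ord.
move=> i; rewrite size_codom card_ord => il.
rewrite codomE (nth_map (Ordinal il)) ?size_enum_ord // ffunE.
by rewrite nth_enum_ord.
Qed.

Lemma RL_intro k (t0 : {ffun 'I_k -> G}) l : R t0 -> perm_eq (codom t0) l -> RL l.
Proof.
move=> R0 P0 m t P.
have Em : m = k.
  by have := perm_size P; have := perm_size P0; rewrite !size_codom !card_ord => -> ->.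
subst m.
have [s ->] : exists s : 'S_k, t = fperm s t0.
  by apply: codom_perm; rewrite (permPr P0).
exact: R_perm.
Qed.

Lemma RL_R l : RL l -> R (tl l).
Proof. by move=> H1; apply: H1; rewrite codom_tl. Qed.

Lemma RL_perm l l' : RL l -> perm_eq l l' -> RL l'.
Proof. by move=> H1 P k t Pt; apply: H1; rewrite (permPr P). Qed.

Lemma RL_del x l : RL (x :: l) -> RL l.
Proof.
move=> H1; apply: (RL_intro (t0 := tl l)); last by rewrite codom_tl.
apply: (R_del (x := x)); apply: H1; by rewrite codom_fcons codom_tl.
Qed.

Lemma RL_dup x l : RL (x :: l) -> RL (x :: x :: l).
Proof.
move=> H1; apply: (RL_intro (t0 := fcons x (fcons x (tl l)))).
  by apply: R_dup; apply: H1; rewrite codom_fcons codom_tl.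
by rewrite !codom_fcons codom_tl.
Qed.

Lemma RL_mul x y l : RL (x :: y :: l) -> RL ((x * y)%g :: l).
Proof.
move=> H1; apply: (RL_intro (t0 := fcons (x * y)%g (tl l))).
  by apply: R_mul; apply: H1; rewrite !codom_fcons codom_tl.
by rewrite !codom_fcons codom_tl.
Qed.

Lemma RL_inv x l : RL (x :: l) -> RL ((x^-1)%g :: l).
Proof.
move=> H1; apply: (RL_intro (t0 := fcons (x^-1)%g (tl l))).
  by apply: R_inv; apply: H1; rewrite !codom_fcons codom_tl.
by rewrite !codom_fcons codom_tl.
Qed.

Lemma RL_one l : RL l -> RL (1%g :: l).
Proof.
move=> H1; apply: (RL_intro (t0 := fcons 1%g (tl l))).
  by apply: R_one; apply: H1; rewrite codom_tl.
by rewrite !codom_fcons codom_tl.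
Qed.

Variables (n : nat) (gs : {ffun 'I_n -> G}).

Lemma RL_gen x : in_gen gs x ->
  forall l, RL l -> {subset codom gs <= l} -> RL (x :: l).
Proof.
elim=> [i||y z _ IHy _ IHz|y _ IHy] l Hl Hs.
- have xl : gs i \in l by apply: Hs; apply: codom_f.
  apply: (RL_perm (l := gs i :: gs i :: rem (gs i) l)).
    by apply: RL_dup; apply: RL_perm Hl _; apply: perm_to_rem.
  by rewrite perm_cons perm_sym perm_to_rem.
- exact: RL_one.
- apply: RL_mul; apply: IHy; first exact: IHz.
  by move=> w /Hs wl; rewrite inE wl orbT.
- exact/RL_inv/IHy.
Qed.

Hypothesis Hgen : forall x : G, in_gen gs x.
Hypothesis Hn : R gs.

Lemma RL_all (h : seq G) : RL (h ++ codom gs).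
Proof.
elim: h => [|x h IH] /=.
  by apply: (RL_intro Hn).
apply: RL_gen => // w wg; by rewrite mem_cat wg orbT.
Qed.

Lemma RL_drop (h m : seq G) : RL (h ++ m) -> RL h.
Proof.
elim: m => [|x m IH]; first by rewrite cats0.
move=> H1; apply: IH; apply: (RL_del (x := x)).
by apply: RL_perm H1 _; rewrite -cat1s perm_catCA.
Qed.

Lemma R_all k (t : {ffun 'I_k -> G}) : R t.
Proof. exact: (@RL_drop (codom t) (codom gs) (@RL_all (codom t)) k t (perm_refl _)). Qed.

End Main.

Unset Implicit Arguments.

Theorem mainTheorem2 (K : fieldType) (H : algType K)
    (D : H -> fts H 2) (eps : H -> K) (S : H -> H)
    (G : groupType) (n : nat) (gs : {ffun 'I_n -> G}) :
  [pchar K] =i pred0 ->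
  is_hopf D eps S -> cocommutative D ->
  (forall x : G, in_gen gs x) ->
  forall phi psi : forall k : nat, {ffun 'I_k -> G} -> fts H k,
    is_homH D eps S phi -> is_homH D eps S psi ->
    teq (phi n gs) (psi n gs) ->
    forall (k : nat) (g : {ffun 'I_k -> G}), teq (phi k g) (psi k g).
Proof.
move=> _ Hh _ Hgen phi psi Hphi Hpsi Hn k g.
exact: (R_all Hh Hphi Hpsi Hgen Hn g).
Qed.
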